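(* Let $V,V'$ be finite-dimensional complex vector spaces, $G\subset GL(V)$ and $G'\subset GL(V')$ finite subgroups, and $F:V\to V'$ a holomorphic diffeomorphism which maps $G$-orbits bijectively onto $G'$-orbits. Then there is a unique group isomorphism $a:G\to G'$ such that $F\circ g=a(g)\circ F$ for every $g\in G$. In particular $a$ and $a^{-1}$ map complex reflections to complex reflections. *)

(* Defs.v *)
From HB Require Import structures.
From mathcomp Require Import all_boot all_order all_algebra.
From mathcomp Require Import complex.
From mathcomp Require Import all_classical all_reals all_analysis.
Set Implicit Arguments. Unset Strict Implicit. Unset Printing Implicit Defensive.
Import Order.TTheory GRing.Theory Num.Theory numFieldNormedType.Exports.
Local Open Scope ring_scope.
Local Open Scope classical_set_scope.

(* V = C^n is modelled as column vectors 'cV[R[i]]_n; a linear map g in GL(V)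
   is an invertible matrix acting by v |-> g *m v (so composition of maps is
   the matrix product). *)

Definition finite_matrix_group (R : realType) (n : nat)
    (G : set 'M[R[i]]_n) : Prop :=
  [/\ finite_set G,
      G 1%:M,
      (forall A B, G A -> G B -> G (A *m B)) &
      (forall A, G A -> A \in unitmx /\ G (invmx A))].

Definition mx_orbit (R : realType) (n : nat) (G : set 'M[R[i]]_n)
    (x : 'cV[R[i]]_n) : set 'cV[R[i]]_n :=
  [set g *m x | g in G].

(* F : C^n -> C^m is holomorphic: complex (Frechet) differentiable at every
   point, the differential being R[i]-linear. *)
Definition holomorphic (R : realType) (n m : nat)
    (F : 'cV[R[i]]_n -> 'cV[R[i]]_m) : Prop :=
  forall x, differentiable F x.

Definition holomorphic_diffeo (R : realType) (n m : nat)
    (F : 'cV[R[i]]_n -> 'cV[R[i]]_m) : Prop :=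
  holomorphic F /\
  exists Fi : 'cV[R[i]]_m -> 'cV[R[i]]_n,
    [/\ cancel F Fi, cancel Fi F & holomorphic Fi].

(* A complex reflection (in a finite group, so of finite order): an element
   whose fixed space {v | g v = v} = ker (g - 1) is a hyperplane, i.e.
   rank (g - 1) = 1. *)
Definition complex_reflection (R : realType) (n : nat) (g : 'M[R[i]]_n) : Prop :=
  \rank (g - 1%:M) = 1%N.

Definition equivariant_iso (R : realType) (n m : nat)
    (G : set 'M[R[i]]_n) (G' : set 'M[R[i]]_m)
    (F : 'cV[R[i]]_n -> 'cV[R[i]]_m) (a : 'M[R[i]]_n -> 'M[R[i]]_m) : Prop :=
  [/\ (forall g, G g -> G' (a g)),
      (forall g h, G g -> G h -> a g = a h -> g = h),
      (forall g', G' g' -> exists2 g, G g & a g = g'),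
      (forall g h, G g -> G h -> a (g *m h) = a g *m a h) &
      (forall g, G g -> forall v, F (g *m v) = a g *m F v)].

(* Main.v *)
Require Import Defs.
From HB Require Import structures.
From mathcomp Require Import all_boot all_order all_algebra.
From mathcomp Require Import complex.
From mathcomp Require Import all_classical all_reals all_analysis.
Import Order.TTheory GRing.Theory Num.Theory numFieldNormedType.Exports.
Local Open Scope ring_scope.
Local Open Scope classical_set_scope.
Import numFieldTopology.Exports.

Lemma mx_ext (K : fieldType) m n (A B : 'M[K]_(m,n)) :
  (forall v : 'cV[K]_n, A *m v = B *m v) -> A = B.
Proof.
move=> h; apply/matrixP=> i j.
have := congr1 (fun M : 'cV_m => M i 0) (h (delta_mx j 0)).
by rewrite -!colE !mxE.
Qed.

Lemma lin_mx_ex (K : fieldType) m n (L : {linear 'cV[K]_n -> 'cV[K]_m}) :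
  exists M : 'M[K]_(m,n), forall v, L v = M *m v.
Proof.
exists (\matrix_(i, j) L (delta_mx j 0) i 0) => v.
rewrite {1}(matrix_sum_delta v) linear_sum.
apply/matrixP => i k; rewrite (ord1 k) !mxE summxE.
apply: eq_bigr => j _; rewrite big_ord1 linearZ !mxE mulrC.
by [].

Qed.

Lemma avoid (R : realDomainType) (I : eqType) (s : seq I) (P : I -> R -> Prop) :
  (forall i, i \in s -> forall c c', P i c -> P i c' -> c = c') ->
  forall b, exists c, b < c /\ forall i, i \in s -> ~ P i c.
Proof.
elim: s => [|i s IH] hu b.
  by exists (b + 1); split; [rewrite ltrDl ltr01 | ].
have hu' : forall j, j \in s -> forall c c', P j c -> P j c' -> c = c'.
  by move=> j js; apply: hu; rewrite inE js orbT.
have [c1 [bc1 h1]] := IH hu' b.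
case: (pselect (P i c1)) => Pic1.
  have [c2 [c12 h2]] := IH hu' c1.
  exists c2; split; first exact: lt_trans bc1 c12.
  move=> j; rewrite inE => /predU1P [-> Pc2|]; last exact: h2.
  have e := hu i (mem_head _ _) _ _ Pic1 Pc2.
  by move: c12; rewrite e ltxx.
by exists c1; split => // j; rewrite inE => /predU1P [->//|]; exact: h1.
Qed.

Lemma good_point (K : numFieldType) p m (s : seq 'M[K]_(p,m)) :
  (forall A, A \in s -> A != 0) ->
  exists y : 'cV[K]_m, forall A, A \in s -> A *m y != 0.
Proof.
elim: s => [|A s IH] hnz; first by exists 0.
have [y0 hy0] : exists y : 'cV[K]_m, forall B, B \in s -> B *m y != 0.
  by apply: IH => B Bs; apply: hnz; rewrite inE Bs orbT.
have Anz := hnz A (mem_head _ _).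
have [w hw] : exists w : 'cV[K]_m, A *m w != 0.
  apply: contrapT => hn; move: Anz; rewrite (_ : A = 0) ?eqxx //.
  apply: mx_ext => v; rewrite mul0mx; apply/eqP/negPn/negP => hv.
  by apply: hn; exists v.
pose P (B : 'M[K]_(p,m)) (c : int) := B *m (y0 + c%:~R *: w) = 0.
have [c [c0 hc]] : exists c : int, 0 < c /\ forall B, B \in s -> ~ P B c.
  apply: avoid => B Bs c c'; rewrite /P !mulmxDr -!scalemxAr => e1 e2.
  have : (c%:~R - c'%:~R : K) *: (B *m w) = 0.
    rewrite scalerBl; apply/eqP; rewrite subr_eq0; apply/eqP/(addrI (B *m y0)).
    by rewrite e1 e2.
  move/eqP; rewrite scaler_eq0 => /orP [|/eqP Bw].
    by rewrite -rmorphB /= intr_eq0 subr_eq0 => /eqP.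
  by move: e1; rewrite Bw scaler0 addr0 => /eqP; rewrite (negbTE (hy0 B Bs)).
case: (eqVneq (A *m y0) 0) => Ay0.
  exists (y0 + c%:~R *: w) => B; rewrite inE => /predU1P [->|Bs].
    rewrite mulmxDr Ay0 add0r -scalemxAr scaler_eq0 negb_or hw andbT intr_eq0.
    by rewrite gt_eqF.
  by apply/eqP; exact: hc.
by exists y0 => B; rewrite inE => /predU1P [->|Bs] //; exact: hy0.
Qed.

Lemma cont_sum (K : numFieldType) (T : topologicalType) (V : normedModType K)
  (I : Type) (s : seq I) (f : I -> T -> V) :
  (forall i, continuous (f i)) -> continuous (fun t => \sum_(i <- s) f i t).
Proof.
move=> cf; elim: s => [|i s IH].
  have -> : (fun t => \sum_(i <- [::]) f i t) = (fun=> 0).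
    by apply/funext => t; rewrite big_nil.
  exact: cst_continuous.
have -> : (fun t => \sum_(j <- i :: s) f j t) =
    (fun t => f i t + \sum_(j <- s) f j t).
  by apply/funext => t; rewrite big_cons.
by move=> x; apply: cvgD; [exact: cf | exact: IH].
Qed.

Lemma mulmx_cont (K : numFieldType) m n (A : 'M[K]_(m,n)) :
  continuous (fun v : 'cV[K]_n => A *m v).
Proof.
have -> : (fun v : 'cV[K]_n => A *m v) =
    (fun v => \sum_(j < n) (v j 0) *: col j A).
  apply/funext => v; apply/matrixP => i k; rewrite (ord1 k) !mxE summxE.
  by apply: eq_bigr => j _; rewrite !mxE mulrC.
apply: cont_sum => j x; apply: continuousZr_tmp; exact: coord_continuous.
Qed.
Arguments mulmx_cont {K m n}.

Lemma closed_zero (K : numFieldType) (T : topologicalType) (V : normedModType K)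
  (g : T -> V) : continuous g -> closed [set t | g t = 0].
Proof.
move=> cg; have := (continuous_closedP g).1 cg [set 0].
apply; apply: accessible_closed_set1; apply: hausdorff_accessible.
exact: norm_hausdorff.
Qed.
Arguments closed_zero {K T V g}.

Lemma closed_seq_union (T : topologicalType) (I : eqType) (s : seq I) (F : I -> set T) :
 (forall i, closed (F i)) -> closed [set t | exists2 i, i \in s & F i t].
Proof.
move=> cF; elim: s => [|i s IH].
  rewrite (_ : [set t | _] = set0); first exact: closed0.
  by apply/seteqP; split => t //= [?].
rewrite (_ : [set t | _] = F i `|` [set t | exists2 j, j \in s & F j t]).
  exact: closedU (cF i) IH.
apply/seteqP; split => t /=.
  by move=> [j]; rewrite inE => /predU1P [-> |js] Fj; [left | right; exists j].
case => [Fi| [j js Fj]]; first by exists i => //; exact: mem_head.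
by exists j => //; rewrite inE js orbT.
Qed.

Definition Cx (R : realType) : numFieldType := R[i].
Local Open Scope complex_scope.

Lemma realC_cont (R : realType) : continuous (fun s : R => (s%:C : Cx R)).
Proof.
move=> x; apply/cvgrPdist_lt => e e0.
have [er er0 ->] : exists2 er : R, 0 < er & e = er%:C.
  by move: e0; case: e => a b; rewrite ltcE /= => /andP [/eqP -> a0]; exists a.
near=> t.
rewrite -rmorphB /= normc_def /= expr0n /= addr0 sqrtr_sqr ltcR.
near: t. exact: cvgr_dist_lt.
Unshelve. all: by end_near. Qed.

Section Core.
Variable R : realType.
Local Notation C := (Cx R).

Definition cpt (c s : R) : C := Complex s (c * s * (1 - s)).

Lemma cpt_cont c : continuous (cpt c).
Proof.
have -> : cpt c = (fun s => (s%:C : C) + 'i * ((c * s * (1 - s))%:C : C)).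
  apply/funext => s; rewrite /cpt; apply/eqP; rewrite eq_complex /=.
  by rewrite !(mul0r, mul1r, mulr0, subr0, addr0, add0r, eqxx).
move=> s; apply: continuousD; first exact: realC_cont.
apply: continuousM; first exact: cvg_cst.
apply: (continuous_comp (f := fun s => c * s * (1 - s))); last exact: realC_cont.
apply: continuousM; first by apply: continuousM; [exact: cvg_cst | exact: cvg_id].
by apply: continuousB; [exact: cvg_cst | exact: cvg_id].
Qed.

Lemma core m (sG : seq 'M[C]_m) (Phi : 'cV[C]_m -> 'cV[C]_m) :
  continuous Phi -> (forall y, exists2 h, h \in sG & Phi y = h *m y) ->
  exists2 h, h \in sG & forall y, Phi y = h *m y.
Proof.
move=> cPhi hPhi.
pose D := [seq pq.1 - pq.2 | pq <- [seq pq <- allpairs pair sG sG | pq.1 != pq.2]].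
have DP : forall h1 h2, h1 \in sG -> h2 \in sG -> h1 != h2 -> h1 - h2 \in D.
  move=> h1 h2 h1s h2s ne; apply/mapP; exists (h1, h2) => //.
  by rewrite mem_filter /= ne; apply: allpairs_f.
have Dnz : forall A, A \in D -> A != 0.
  move=> A /mapP [[h1 h2]]; rewrite mem_filter /= => /andP [ne _] ->.
  by rewrite subr_eq0.
have sep : forall y : 'cV[C]_m, (forall A, A \in D -> A *m y != 0) ->
    forall h1 h2 : 'M[C]_m, h1 \in sG -> h2 \in sG -> h1 *m y = h2 *m y -> h1 = h2.
  move=> y gy h1 h2 h1s h2s e; apply/eqP; apply: contraT => ne.
  by have := gy _ (DP _ _ h1s h2s ne); rewrite mulmxBl e subrr eqxx.
have [y0 gy0] := @good_point C m m D Dnz.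
have [h0 h0s Phy0] := hPhi y0.
exists h0 => // z.
pose d := z - y0.
pose gam (c s : R) := y0 + cpt c s *: d.
have [c [_ hc]] : exists c : R, 0 < c /\ forall A, A \in D ->
    ~ (exists s, (0 <= s < 1) /\ A *m gam c s = 0).
  apply: avoid => A AD c1 c2 [s1 [/andP [s10 s11] e1]] [s2 [/andP [s20 s21] e2]].
  move: e1 e2; rewrite /gam !mulmxDr -!scalemxAr => e1 e2.
  have Ay0 := gy0 A AD.
  have et : cpt c1 s1 = cpt c2 s2.
    have : (cpt c1 s1 - cpt c2 s2) *: (A *m d) = 0.
      rewrite scalerBl; apply/eqP; rewrite subr_eq0; apply/eqP/(addrI (A *m y0)).
      by rewrite e1 e2.
    move/eqP; rewrite scaler_eq0 subr_eq0 => /orP [/eqP //|/eqP Ad].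
    by move: e1; rewrite Ad scaler0 addr0 => /eqP; rewrite (negbTE Ay0).
  move: et; rewrite /cpt => -[es ec]; subst s2.
  have s1n0 : s1 != 0.
    apply: contraTneq Ay0 => s1z; move: e1; rewrite /cpt s1z mulr0 mul0r.
    by rewrite (_ : 0*i = 0 :> C) // scale0r addr0 => ->; rewrite eqxx.
  have s1n1 : 1 - s1 != 0 by rewrite subr_eq0 gt_eqF.
  by apply: (mulIf s1n0); apply: (mulIf s1n1).
have good : forall s, 0 <= s < 1 -> forall A, A \in D -> A *m gam c s != 0.
  by move=> s hs A AD; apply/eqP => e; apply: (hc A AD); exists s.
pose f s := Phi (gam c s) - h0 *m gam c s.
have cgam : continuous (gam c).
  move=> s; apply: (continuousD (f := fun=> y0) (g := fun s => cpt c s *: d)).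
    exact: cvg_cst.
  by apply: continuousZr_tmp; exact: cpt_cont.
have cgh : forall h : 'M[C]_m, continuous (fun s => Phi (gam c s) - h *m gam c s).
  move=> h s; apply: (continuousB (f := fun s => Phi (gam c s))
      (g := fun s => h *m gam c s)).
    by apply: (continuous_comp (f := gam c) (g := Phi)); [exact: cgam | exact: cPhi].
  apply: (continuous_comp (f := gam c) (g := fun v => h *m v)); first exact: cgam.
  exact: mulmx_cont.
have cf : continuous f by exact: cgh.
pose Aint := [set s : R | 0 <= s < 1].
have conn : connected Aint.
  apply/connected_intervalP => x y /andP[x0 x1] /andP [y0' y1] w /andP [xw wy].
  by rewrite /Aint /= (le_trans x0 xw) (le_lt_trans wy y1).
have key : [set s | Aint s /\ f s = 0] = Aint.
  apply: conn.
  - exists 0; split; first by rewrite /Aint /= lexx ltr01.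
    rewrite /f /gam /cpt !(mulr0, mul0r) (_ : Complex 0 0 = 0 :> C) // scale0r addr0.
    by rewrite Phy0 subrr.
  - exists (~` [set s | exists2 h, h \in sG &
        (h != h0 /\ Phi (gam c s) = h *m gam c s)]).
      rewrite openC; apply: closed_seq_union => h.
      case: (eqVneq h h0) => [->|ne].
        rewrite (_ : (fun t => _) = set0); first exact: closed0.
        by rewrite predeqE => t; split => // -[].
      rewrite (_ : (fun t => _) = [set t | Phi (gam c t) - h *m gam c t = 0]).
        exact: closed_zero (cgh h).
      apply/seteqP; split => t /=; first by case=> _ ->; rewrite subrr.
      by move/eqP; rewrite subr_eq0 => /eqP.
    apply/seteqP; split => s /=.
      move=> [As fs]; split => // -[h hs [ne eh]].
      have e0 : Phi (gam c s) = h0 *m gam c s by apply/eqP; rewrite -subr_eq0; apply/eqP; exact: fs.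
      have := sep _ (good s As) h h0 hs h0s; rewrite -eh e0 => /(_ erefl) eh0.
      by rewrite eh0 eqxx in ne.
    move=> [As nex]; split => //.
    have [h hs eh] := hPhi (gam c s).
    case: (eqVneq h h0) => [ehh|ne]; first by rewrite /f eh ehh subrr.
    by exfalso; apply: nex; exists h.
  - by exists [set s | f s = 0]; first exact: closed_zero cf.
have fA : forall s, 0 <= s < 1 -> f s = 0.
  move=> s hs; have : [set s | Aint s /\ f s = 0] s by rewrite key.
  by case.
have f1 : f 1 = 0.
  apply: (@closed_cvg _ _ (at_left (1:R)) _ id [set s | f s = 0] (closed_zero cf) _ 1).
    near=> s; apply: fA; apply/andP; split.
      by near: s; apply: nbhs_left_ge; exact: ltr01.
    by near: s; exact: nbhs_left_lt.
  by apply: cvg_at_left_filter; exact: cvg_id.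
move: f1; rewrite /f /gam /cpt subrr !mulr0 (_ : Complex 1 0 = 1 :> C) //.
rewrite scale1r /d (_ : y0 + (z - y0) = z); last by rewrite addrC subrK.
by move=> /eqP; rewrite subr_eq0 => /eqP.
Unshelve. all: by end_near. Qed.

End Core.

Lemma rank_conj (K : fieldType) n m (g : 'M[K]_n) (h : 'M[K]_m)
  (M : 'M[K]_(m, n)) (N : 'M[K]_(n, m)) :
  M *m N = 1%:M -> N *m M = 1%:M -> h *m M = M *m g ->
  \rank (g - 1%:M) = \rank (h - 1%:M).
Proof.
move=> MN NM hM.
have eh : h - 1%:M = M *m (g - 1%:M) *m N.
  by rewrite mulmxBr mulmxBl !mulmx1 MN -hM -mulmxA MN mulmx1.
have eg : g - 1%:M = N *m (h - 1%:M) *m M.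
  by rewrite mulmxBr mulmxBl !mulmx1 NM -(mulmxA N) hM mulmxA NM mul1mx.
apply/eqP; rewrite eqn_leq; apply/andP; split.
  rewrite eg; apply: leq_trans (mxrankM_maxl _ _) _; exact: mxrankM_maxr.
rewrite eh; apply: leq_trans (mxrankM_maxl _ _) _; exact: mxrankM_maxr.
Qed.

Lemma deriv_conj (R : realType) n m (F : 'cV[Cx R]_n -> 'cV[Cx R]_m) Fi :
  cancel F Fi -> cancel Fi F ->
  (forall x, differentiable F x) -> (forall x, differentiable Fi x) ->
  exists M : 'M[Cx R]_(m, n), exists N : 'M[Cx R]_(n, m),
    [/\ M *m N = 1%:M, N *m M = 1%:M &
      forall g h, (forall v, F (g *m v) = h *m F v) -> h *m M = M *m g].
Proof.
move=> FK FiK dF dFi.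
have [M hM] := @lin_mx_ex _ _ _ ('d F 0).
have [N hN] := @lin_mx_ex _ _ _ ('d Fi (F 0)).
have e1 := diff_comp (dF 0) (dFi (F 0)).
have e2 := diff_comp (dFi (F 0)) (dF (Fi (F 0))).
rewrite FK in e2.
have idE1 : Fi \o F = id by apply/funext => x; exact: FK.
have idE2 : F \o Fi = id by apply/funext => x; exact: FiK.
rewrite idE1 diff_val in e1.
rewrite idE2 diff_val in e2.
exists M, N; split.
- apply: mx_ext => v; rewrite mul1mx -mulmxA -hN -hM.
  by have := congr1 (fun f => f v) e2.
- apply: mx_ext => v; rewrite mul1mx -mulmxA -hM -hN.
  by have := congr1 (fun f => f v) e1.
move=> g h eq; apply: mx_ext => v.
have eF : F \o mulmx g = mulmx h \o F by apply/funext => x; exact: eq.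
have dg : forall (k : 'M[Cx R]_n) (x : 'cV[Cx R]_n), differentiable (mulmx k) x.
  move=> k x.
  exact: (linear_differentiable (f := (mulmx k : {linear 'cV[Cx R]_n -> 'cV[Cx R]_n})) x (mulmx_cont k)).
have dh : forall (k : 'M[Cx R]_m) (x : 'cV[Cx R]_m), differentiable (mulmx k) x.
  move=> k x.
  exact: (linear_differentiable (f := (mulmx k : {linear 'cV[Cx R]_m -> 'cV[Cx R]_m})) x (mulmx_cont k)).
have d1 := diff_comp (dg g 0) (dF (g *m 0)).
have d2 := diff_comp (dF 0) (dh h (F 0)).
rewrite eF in d1.
have e := etrans (esym d1) d2.
have := congr1 (fun f => f v) e => /=.
have Lg : 'd (mulmx g) 0 = mulmx g :> (_ -> _) := diff_lin _ (mulmx_cont g).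
have Lh : 'd (mulmx h) (F 0) = mulmx h :> (_ -> _) := diff_lin _ (mulmx_cont h).
rewrite Lg Lh mulmx0 !hM => e'.
by rewrite -!mulmxA e'.
Qed.


Lemma fwd_lemma (R : realType) n m (G : set 'M[Cx R]_n) (G' : set 'M[Cx R]_m)
  (F : 'cV[Cx R]_n -> 'cV[Cx R]_m) (Fi : 'cV[Cx R]_m -> 'cV[Cx R]_n)
  (sG' : seq 'M[Cx R]_m) :
  G' = [set` sG'] -> continuous F -> continuous Fi -> cancel F Fi -> cancel Fi F ->
  (forall x, F @` mx_orbit G x = mx_orbit G' (F x)) ->
  forall g, G g -> exists2 h, G' h & forall v, F (g *m v) = h *m F v.
Proof.
move=> eG' cF cFi FK FiK horb g Gg.
have [h hs eh] : exists2 h, h \in sG' & forall y, F (g *m Fi y) = h *m y.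
  apply: (@core R m sG' (fun y => F (g *m Fi y))).
  - move=> y; apply: (continuous_comp (f := Fi) (g := fun v => F (g *m v))).
      exact: cFi.
    apply: (continuous_comp (f := mulmx g) (g := F)); first exact: mulmx_cont.
    exact: cF.
  - move=> y; have H := horb (Fi y); rewrite FiK in H.
    have : mx_orbit G' y (F (g *m Fi y)).
      by rewrite -H; exists (g *m Fi y) => //; exists g.
    move=> [h G'h eh]; exists h; last by rewrite eh.
    by move: G'h; rewrite eG'.
exists h; first by rewrite eG'.
by move=> v; rewrite -eh FK.
Qed.

Local Close Scope complex_scope.

Theorem lemma5p1 (R : realType) (n m : nat)
    (G : set 'M[R[i]]_n) (G' : set 'M[R[i]]_m)
    (F : 'cV[R[i]]_n -> 'cV[R[i]]_m) :
  finite_matrix_group G -> finite_matrix_group G' ->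
  holomorphic_diffeo F ->
  (forall x, F @` mx_orbit G x = mx_orbit G' (F x)) ->
  exists a : 'M[R[i]]_n -> 'M[R[i]]_m,
    [/\ equivariant_iso G G' F a,
        (forall b, equivariant_iso G G' F b -> forall g, G g -> b g = a g) &
        (forall g, G g -> complex_reflection g <-> complex_reflection (a g))].
Proof.
move=> [finG G1 GM GV] [finG' G'1 G'M G'V] [holF [Fi [FK FiK holFi]]] horb.
have cF : continuous (F : 'cV[Cx R]_n -> 'cV[Cx R]_m).
  by move=> x; exact: differentiable_continuous.
have cFi : continuous (Fi : 'cV[Cx R]_m -> 'cV[Cx R]_n).
  by move=> x; exact: differentiable_continuous.
have [sG eG] := (finite_seqP G).1 finG.
have [sG' eG'] := (finite_seqP G').1 finG'.
have fwd : forall g, G g -> exists2 h, G' h & forall v, F (g *m v) = h *m F v.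
  exact: (@fwd_lemma R n m G G' F Fi sG').
have bwd : forall g', G' g' -> exists2 g, G g & forall w, Fi (g' *m w) = g *m Fi w.
  apply: (@fwd_lemma R m n G' G Fi F sG) => // x.
  have H := horb (Fi x); rewrite FiK in H.
  apply/seteqP; split => y.
    by move=> [w]; rewrite -H => -[u uO <-] <-; rewrite FK.
  move=> yO; exists (F y); last exact: FK.
  by rewrite -H; exists y.
have extF : forall A B : 'M[R[i]]_m, (forall v, A *m F v = B *m F v) -> A = B.
  by move=> A B hAB; apply: mx_ext => y; rewrite -(FiK y).
have [a ha] : {a : 'M[R[i]]_n -> 'M[R[i]]_m &
    forall g, G g -> G' (a g) /\ forall v, F (g *m v) = a g *m F v}.
  apply: (choice (P := fun g (h : 'M[R[i]]_m) =>
    G g -> G' h /\ forall v, F (g *m v) = h *m F v)) => g. case: (pselect (G g)) => Gg.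
    by have [h G'h eh] := fwd g Gg; exists h.
  by exists 0.
have aeq : forall g, G g -> forall v, F (g *m v) = a g *m F v.
  by move=> g Gg; exact: (ha g Gg).2.
exists a; split.
- split.
  + by move=> g Gg; exact: (ha g Gg).1.
  + move=> g h Gg Gh eah; apply: mx_ext => v; apply: (can_inj FK).
    by rewrite aeq // eah -aeq.
  + move=> g' Gg'; have [g Gg eg] := bwd g' Gg'.
    exists g => //; apply: extF => v.
    by rewrite -aeq // -{1}(FK v) -eg FiK.
  + move=> g h Gg Gh; apply: extF => v.
    by rewrite -mulmxA -(aeq h Gh) -(aeq g Gg) -(aeq _ (GM _ _ Gg Gh)) mulmxA.
  + exact: aeq.
- move=> b [_ _ _ _ beq] g Gg; apply: extF => v.
  by rewrite -beq // aeq.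
have [M [N [MN NM hMN]]] := @deriv_conj R n m F Fi FK FiK holF holFi.
move=> g Gg; rewrite /complex_reflection.
by rewrite (@rank_conj _ _ _ g (a g) M N MN NM (hMN g (a g) (aeq g Gg))).
Qed.
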